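(* Let $X$ be a totally ordered set of distinct elements, let $k \ge 2$ and $1\le t\le k$ with $t \ne (k+1)/2$, and consider the $(k,t)$ scale which on input any $k$-element subset of $X$ returns its $t$-th smallest element. Let $S$ be the set of the $t-1$ smallest elements of $X$ and $L$ the set of the $k-t$ largest elements of $X$. Let $z_1,\ldots,z_{k+1}$ be $k+1$ fixed elements of $X$. Then by querying all $\binom{k+1}{k}$ $k$-element subsets of $\{z_1,\ldots,z_{k+1}\}$ one can find two of them, $x$ and $y$, such that $x,y \notin S\cup L$ and one knows that $x < y$.
   Context: The condition $t \neq (k+1)/2$ means the scale is asymmetric (not invariant under reversing the order). *)

(* Defs.v *)
From mathcomp Require Import all_boot.
Set Implicit Arguments. Unset Strict Implicit. Unset Printing Implicit Defensive.

(* A total (strict) order on the finite ground set X = T is given by an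
   injective ranking r : T -> nat : x < y iff r x < r y. *)

Definition scale (T : finType) (r : T -> nat) (t : nat) (A : {set T}) : option T :=
  [pick a in A | #|[set b in A | r b < r a]| == t.-1].

Definition smallS (T : finType) (r : T -> nat) (t : nat) : {set T} :=
  [set x | #|[set y | r y < r x]| < t.-1].

Definition largeL (T : finType) (r : T -> nat) (k t : nat) : {set T} :=
  [set x | #|[set y | r x < r y]| < k - t].

(* Answers available to the algorithm: the scale's answers on exactly the
   k-element subsets of Z; no information on other sets. *)
Definition answers (T : finType) (r : T -> nat) (k t : nat) (Z : {set T})
  (A : {set T}) : option T :=
  if (A \subset Z) && (#|A| == k) then scale r t A else None.

(* Main.v *)
Require Import Defs.
From mathcomp Require Import all_boot.
From mathcomp Require Import zify.

Section Aux.
Variables (T : finType) (r : T -> nat).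
Hypothesis rinj : injective r.

Definition rk (A : {set T}) u := #|[set b in A | r b < r u]|.

Lemma rk_mono (A : {set T}) u v : u \in A -> r u < r v -> rk A u < rk A v.
Proof.
move=> uA ruv; apply: proper_card; apply/properP; split.
  apply/subsetP => b; rewrite !inE => /andP[-> h] /=; exact: ltn_trans h ruv.
by exists u; rewrite !inE ?uA ?ruv // ltnn.
Qed.

Lemma rk_lt (A : {set T}) u v : u \in A -> v \in A -> (rk A u < rk A v) = (r u < r v).
Proof.
move=> uA vA; case: (ltngtP (r u) (r v)) => h.
- by rewrite (@rk_mono A _ _ uA h).
- by apply/negbTE; rewrite -leqNgt ltnW // (@rk_mono A _ _ vA h).
- by rewrite (rinj _ _ h) ltnn.
Qed.

Lemma rk_inj (A : {set T}) u v : u \in A -> v \in A -> rk A u = rk A v -> u = v.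
Proof.
move=> uA vA e; case: (ltngtP (r u) (r v)) => h.
- by have := (@rk_mono A _ _ uA h); rewrite e ltnn.
- by have := (@rk_mono A _ _ vA h); rewrite e ltnn.
- exact: rinj.
Qed.

Lemma rkD1 (A : {set T}) v w : v \in A -> 
  rk (A :\ v) w = rk A w - (r v < r w).
Proof.
move=> vA; rewrite /rk (cardsD1 v [set b in A | r b < r w]).
have -> : [set b in A :\ v | r b < r w] = [set b in A | r b < r w] :\ v.
  by apply/setP => b; rewrite !inE andbA.
by rewrite !inE vA /= addKn.
Qed.

Lemma scale_spec (A : {set T}) w t : w \in A -> rk A w = t.-1 -> scale r t A = Some w.
Proof.
move=> wA e; rewrite /scale; case: pickP => [a /andP[aA /eqP ha]|H].
  by congr Some; apply: (@rk_inj A _ _ aA wA); rewrite /rk ha -e.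
by have := H w; rewrite wA /=; move: e; rewrite /rk => ->; rewrite eqxx.
Qed.

End Aux.
Arguments rk {T} r A u.
Arguments rk_inj {T r} rinj {A u v}.
Arguments rk_lt {T r} rinj {A u v}.
Arguments rkD1 {T r A v} w.
Arguments scale_spec {T r} rinj {A w t}.

Lemma card_ord_lt n m : m <= n -> #|[set j : 'I_n | j < m]| = m.
Proof.
move=> mn.
have -> : [set j : 'I_n | j < m] = [set widen_ord mn i | i : 'I_m].
  apply/setP => j; rewrite inE; apply/idP/imsetP.
    by move=> jm; exists (Ordinal jm) => //; apply: val_inj.
  by move=> [i _ ->]; rewrite /= ltn_ord.
by rewrite card_imset ?card_ord // => i j /(congr1 val) /= /val_inj.
Qed.

Lemma card_ord_ge n m : m <= n -> #|[set j : 'I_n | m <= j]| = n - m.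
Proof.
move=> mn; have := cardsC [set j : 'I_n | j < m]; rewrite card_ord card_ord_lt //.
have -> : ~: [set j : 'I_n | j < m] = [set j : 'I_n | m <= j].
  by apply/setP => j; rewrite !inE -leqNgt.
lia.
Qed.

Lemma Some_eqF (U : eqType) (a b : U) : a != b -> (Some a == Some b) = false.
Proof. by move=> ab; apply/eqP => -[e]; rewrite e eqxx in ab. Qed.

Theorem lemma1 (T : finType) (k t : nat) (z : 'I_k.+1 -> T) :
  2 <= k -> 1 <= t <= k -> t.*2 != k.+1 -> injective z ->
  exists D : ({set T} -> option T) -> T * T,
    forall r : T -> nat, injective r ->
      let Z := [set z i | i : 'I_k.+1] in
      let xy := D (answers r k t Z) in
      [/\ xy.1 \in Z, xy.2 \in Z,
          xy.1 \notin smallS r t :|: largeL r k t,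
          xy.2 \notin smallS r t :|: largeL r k t &
          r xy.1 < r xy.2].
Proof.
move=> k2 /andP[t1 tk] tne zinj.
case: t t1 tk tne => // t _ tk tne.
pose Z := [set z i | i : 'I_k.+1].
exists (fun f => let c u := #|[set i : 'I_k.+1 | f (Z :\ z i) == Some u]| in
  (odflt (z ord0) [pick u in Z | c u == k.+1 - t.+1],
   odflt (z ord0) [pick u in Z | c u == t.+1])).
move=> r rinj /=; rewrite -/Z.
have zZ i : z i \in Z by apply: imset_f.
have cardZ : #|Z| = k.+1 by rewrite card_imset // card_ord.
have rkle u : u \in Z -> rk r Z u < k.+1.
  move=> uZ; have : [set b in Z | r b < r u] \subset Z :\ u.
    by apply/subsetP => b; rewrite !inE => /andP[-> h]; rewrite andbT; apply/eqP => e; move: h; rewrite e ltnn.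
  move/subset_leq_card; have := cardsD1 u Z; rewrite uZ cardZ /rk; lia.
pose g i : 'I_k.+1 := inord (rk r Z (z i)).
have gval i : nat_of_ord (g i) = rk r Z (z i) by rewrite inordK // rkle.
have ginj : injective g.
  move=> i j /(congr1 (@nat_of_ord _)); rewrite !gval => /(rk_inj rinj (zZ i) (zZ j)); exact: zinj.
have [g' gK g'K] := injF_bij ginj.
pose wt := z (g' (inord t)); pose w1 := z (g' (inord t.+1)).
have rkwt : rk r Z wt = t by rewrite /wt -gval g'K inordK //; lia.
have rkw1 : rk r Z w1 = t.+1 by rewrite /w1 -gval g'K inordK //; lia.
have wtZ : wt \in Z by apply: zZ.
have w1Z : w1 \in Z by apply: zZ.
have ans i : answers r k t.+1 Z (Z :\ z i) = scale r t.+1 (Z :\ z i).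
  rewrite /answers subsetDl /=.
  have := cardsD1 (z i) Z; rewrite zZ cardZ add1n => -[<-]; by rewrite eqxx.
have ans_hi i : t < g i -> answers r k t.+1 Z (Z :\ z i) = Some wt.
  move=> h; rewrite ans; apply: (scale_spec rinj).
    rewrite !inE wtZ andbT; apply/eqP => e; move: rkwt; rewrite e -gval; lia.
  rewrite rkD1 // rkwt -(rk_lt rinj (zZ i) wtZ) -gval rkwt.
  by rewrite ltnNge (ltnW h) subn0.
have ans_lo i : g i <= t -> answers r k t.+1 Z (Z :\ z i) = Some w1.
  move=> h; rewrite ans; apply: (scale_spec rinj).
    rewrite !inE w1Z andbT; apply/eqP => e; move: rkw1; rewrite e -gval; lia.
  change (rk r (Z :\ z i) w1 = t); rewrite rkD1 // rkw1 -(rk_lt rinj (zZ i) w1Z) -gval rkw1. by rewrite ltnS h subn1.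
have wt1 : w1 != wt by apply/eqP => e; move: rkw1; rewrite e rkwt; lia.
have wt1' : wt != w1 by rewrite eq_sym.
have tne' : t.+1 + t.+1 <> k.+1 by move/eqP: tne; rewrite -addnn.
pose c u := #|[set i | answers r k t.+1 Z (Z :\ z i) == Some u]|.
have cwt : c wt = k.+1 - t.+1.
  rewrite /c -(@card_ord_ge k.+1 t.+1) //.
  transitivity #|g @^-1: [set j : 'I_k.+1 | t < j]|; last exact: card_preimset.
  apply: eq_card => i; rewrite !inE.
  case: (ltnP t (g i)) => h; first by rewrite ans_hi // eqxx.
  by rewrite ans_lo // Some_eqF.
  exact: ltnW tk.
have cw1 : c w1 = t.+1.
  rewrite /c.
  transitivity #|g @^-1: [set j : 'I_k.+1 | j < t.+1]|; last by rewrite card_preimset // card_ord_lt // ltnS ltnW.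
  apply: eq_card => i; rewrite !inE.
  case: (ltnP t (g i)) => h; first by rewrite ans_hi // Some_eqF // ltnNge h.
  by rewrite ans_lo //= eqxx ltnS h.
have c0 u : u != wt -> u != w1 -> c u = 0.
  move=> uwt uw1; have uwt' : wt != u by rewrite eq_sym.
  have uw1' : w1 != u by rewrite eq_sym.
  apply/eqP; rewrite cards_eq0; apply/eqP/setP => i; rewrite !inE.
  case: (ltnP t (g i)) => h; first by rewrite ans_hi // Some_eqF.
  by rewrite ans_lo // Some_eqF.
have x1 : odflt (z ord0) [pick u in Z | c u == k.+1 - t.+1] = wt.
  have := cwt; case: pickP => [u /andP[uZ /eqP cu] _|H cwt'] /=.
    have [->//|uwt] := eqVneq u wt.
    have [e|uw1] := eqVneq u w1; first by move: cu; rewrite e cw1; lia.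
    by move: cu; rewrite c0 //; lia.
  by move: (H wt); rewrite /= wtZ cwt' eqxx.
have x2 : odflt (z ord0) [pick u in Z | c u == t.+1] = w1.
  have := cw1; have := cwt; case: pickP => [u /andP[uZ /eqP cu] _ _|H _ cw1'] /=.
    have [->//|uw1] := eqVneq u w1.
    have [e|uwt] := eqVneq u wt; first by move: cu; rewrite e cwt; lia.
    by move: cu; rewrite c0 //; lia.
  by move: (H w1); rewrite /= w1Z cw1' eqxx.
rewrite x1 x2.
have below u : u \in Z -> rk r Z u <= #|[set y | r y < r u]|.
  move=> uZ; apply: subset_leq_card; apply/subsetP => y; rewrite !inE => /andP[].
  by [].
have above u : u \in Z -> k - rk r Z u <= #|[set y | r u < r y]|.
  move=> uZ; have := @card_ord_ge k.+1 (rk r Z u).+1 (rkle _ uZ).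
  rewrite subSS => <-.
  rewrite -(card_preimset [set j : 'I_k.+1 | (rk r Z u).+1 <= j] ginj).
  rewrite -(card_imset (g @^-1: [set j : 'I_k.+1 | (rk r Z u).+1 <= j]) zinj).
  apply: subset_leq_card; apply/subsetP => y /imsetP[i]; rewrite !inE => hi ->.
  by rewrite gval in hi; rewrite -(rk_lt rinj uZ (zZ i)).
split => //.
- rewrite !inE negb_or -!leqNgt; apply/andP; split.
    by apply: leq_trans (below _ wtZ); rewrite rkwt.
  by apply: leq_trans (above _ wtZ); rewrite rkwt leq_sub2l.
- rewrite !inE negb_or -!leqNgt; apply/andP; split.
    by apply: leq_trans (below _ w1Z); rewrite rkw1.
  by apply: leq_trans (above _ w1Z); rewrite rkw1.
- by rewrite -(rk_lt rinj wtZ w1Z) rkwt rkw1.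
Qed.
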